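(* Let $m\ge 0$ be an integer and let $\rho_{\mathrm{ord}}:\mathbf U\to\mathrm{End}_R(V^{\otimes m})$ be the representation of $\mathbf U$ on $V^{\otimes m}$. Then $\rho_{\mathrm{ord}}(\mathbf U)=\rho_{\mathrm{ord}}(\mathbf U')$.
   Context: $R$ is a commutative ring with $1$, $q\in R$ invertible, $n\ge1$. Let $U_q(\mathfrak{gl}_n)$ be the $\mathbb{Q}(q)$-algebra ($q$ an indeterminate) generated by $e_i,f_i$ ($1\le i\le n-1$) and $q^h$ ($h\in P^\vee=\bigoplus_{j=1}^n\mathbb Z h_j$) with the usual relations: $q^0=1$, $q^hq^{h'}=q^{h+h'}$, $q^he_iq^{-h}=q^{\alpha_i(h)}e_i$, $q^hf_iq^{-h}=q^{-\alpha_i(h)}f_i$, $e_if_j-f_je_i=\delta_{ij}\frac{K_i-K_i^{-1}}{q-q^{-1}}$ with $K_i=q^{h_i-h_{i+1}}$, and the quantum Serre relations; here $\varepsilon_j(h_k)=\delta_{jk}$, $\alpha_i=\varepsilon_i-\varepsilon_{i+1}$. Comultiplication: $\Delta(q^h)=q^h\otimes q^h$, $\Delta(e_i)=e_i\otimes K_i^{-1}+1\otimes e_i$, $\Delta(f_i)=f_i\otimes 1+K_i\otimes f_i$. With $[l]_q=\sum_{i=0}^{l-1}q^{2i-l+1}$, $e_i^{(l)}=e_i^l/[l]_q!$, $f_i^{(l)}=f_i^l/[l]_q!$, let $\mathbf U_{\mathbb Z}$ (resp. $\mathbf U'_{\mathbb Z}$) be the $\mathbb Z[q,q^{-1}]$-subalgebra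 generated by all $q^h$ (resp. all $K_i$) and all $e_i^{(l)},f_i^{(l)}$, and $\mathbf U=R\otimes\mathbf U_{\mathbb Z}$, $\mathbf U'=R\otimes\mathbf U'_{\mathbb Z}\subseteq\mathbf U$ (specializing $q\mapsto q$). $V=R^n$ with basis $v_1,\dots,v_n$ is the $\mathbf U$-module with $q^hv_j=q^{\varepsilon_j(h)}v_j$, $e_iv_{i+1}=v_i$, $e_iv_j=0$ ($j\ne i+1$), $f_iv_i=v_{i+1}$, $f_iv_j=0$ ($j\ne i$) (the $R$-form of the vector representation); $\mathbf U$ acts on $V^{\otimes m}$ via the comultiplication. *)

(* Defs.v *)
From HB Require Import structures.
From mathcomp Require Import all_boot all_order all_algebra.
Set Implicit Arguments. Unset Strict Implicit. Unset Printing Implicit Defensive.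
Import Order.TTheory GRing.Theory Num.Theory.
Local Open Scope ring_scope.

(* Conventions: basis v_1..v_n of V is indexed by 'I_n (0-based), the
   Chevalley index i (1 <= i <= n-1 in the paper) by a nat i with i.+1 < n;
   e_i sends v_(i+1) to v_i (0-based: index i.+1 to index i).
   V^{(x)m} is the free R-module with basis v_J, J : {ffun 'I_m -> 'I_n};
   End_R(V^{(x)m}) is identified with 'M[R]_(#|tens n m|) via enum_rank,
   with A a b = coefficient of v_(enum_val a) in A v_(enum_val b). *)

Section Rep.
Variables (R : comPzRingType) (q qi : R) (n m : nat).

(* q^z for z : int, qi being the inverse of q *)
Definition qpow (z : int) : R :=
  match z with Posz k => q ^+ k | Negz k => qi ^+ k.+1 end.

Definition tens := {ffun 'I_m -> 'I_n}.
Definition N := #|{: tens}|.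
Definition EndV := 'M[R]_N.

Definition mx_of (coef : tens -> tens -> R) : EndV :=
  \matrix_(a, b) coef (enum_val a) (enum_val b).

(* alpha_i(eps_j) = (j == i) - (j == i+1) : the exponent of K_i on v_j *)
Definition cw (i : nat) (j : 'I_n) : int :=
  ((nat_of_ord j == i) : int) - ((nat_of_ord j == i.+1) : int).

(* q^h, h = sum_j h_j (coefficients h : 'I_n -> int), acting diagonally *)
Definition qh_mx (h : 'I_n -> int) : EndV :=
  mx_of (fun J' J => if J' == J then qpow (\sum_(k < m) h (J k)) else 0).

(* K_i = q^(h_i - h_(i+1)) *)
Definition K_mx (i : nat) : EndV :=
  mx_of (fun J' J => if J' == J then qpow (\sum_(k < m) cw i (J k)) else 0).

Definition diffset (J' J : tens) : {set 'I_m} := [set k | J' k != J k].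

(* action of the divided power e_i^(l) on V^{(x)m} (via the iterated
   comultiplication): v_J |-> sum over sets S of positions carrying v_(i+1),
   |S| = l, of q^(- sum_(k in S) sum_(p > k, p notin S) alpha_i(eps_(J p)))
   times v_J with the entries in S replaced by v_i. *)
Definition e_mx (i l : nat) : EndV :=
  mx_of (fun J' J =>
    let S := diffset J' J in
    if [forall k, (J' k == J k) ||
                  ((nat_of_ord (J k) == i.+1) && (nat_of_ord (J' k) == i))]
       && (#|S| == l)
    then qpow (- \sum_(k in S) \sum_(p : 'I_m | (k < p)%N && (p \notin S))
                   cw i (J p))
    else 0).

(* action of f_i^(l): v_J |-> sum over sets S of positions carrying v_i,
   |S| = l, of q^(sum_(k in S) sum_(p < k, p notin S) alpha_i(eps_(J p)))
   times v_J with the entries in S replaced by v_(i+1). *)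
Definition f_mx (i l : nat) : EndV :=
  mx_of (fun J' J =>
    let S := diffset J' J in
    if [forall k, (J' k == J k) ||
                  ((nat_of_ord (J k) == i) && (nat_of_ord (J' k) == i.+1))]
       && (#|S| == l)
    then qpow (\sum_(k in S) \sum_(p : 'I_m | (p < k)%N && (p \notin S))
                   cw i (J p))
    else 0).

Inductive gen_alg (G : EndV -> Prop) : EndV -> Prop :=
  | ga_gen A : G A -> gen_alg G A
  | ga_one : gen_alg G 1%:M
  | ga_add A B : gen_alg G A -> gen_alg G B -> gen_alg G (A + B)
  | ga_mul A B : gen_alg G A -> gen_alg G B -> gen_alg G (A *m B)
  | ga_scale (r : R) A : gen_alg G A -> gen_alg G (r *: A).

Definition U_gens (A : EndV) : Prop :=
  (exists h : 'I_n -> int, A = qh_mx h) \/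
  (exists i l : nat, (i.+1 < n)%N /\ (A = e_mx i l \/ A = f_mx i l)).

Definition U'_gens (A : EndV) : Prop :=
  (exists i : nat, (i.+1 < n)%N /\ A = K_mx i) \/
  (exists i l : nat, (i.+1 < n)%N /\ (A = e_mx i l \/ A = f_mx i l)).

Definition rho_U (A : EndV) : Prop := gen_alg U_gens A.
Definition rho_U' (A : EndV) : Prop := gen_alg U'_gens A.

End Rep.

Arguments rho_U [R] q qi n m A.
Arguments rho_U' [R] q qi n m A.

(* Main.v *)
Require Import Defs.
From HB Require Import structures.
From mathcomp Require Import all_boot all_order all_algebra.
From mathcomp Require Import ring lra zify.
Set Implicit Arguments. Unset Strict Implicit. Unset Printing Implicit Defensive.
Import Order.TTheory GRing.Theory Num.Theory.
Local Open Scope ring_scope.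


Section QP.
Variables (R : comPzRingType) (q qi : R).
Hypothesis hq : q * qi = 1.
Local Notation qp := (qpow q qi).

Lemma qpowE (a b : nat) : qp (a%:Z - b%:Z) = q ^+ a * qi ^+ b.
Proof.
have qqb k : q ^+ k * qi ^+ k = 1 by rewrite -exprMn hq expr1n.
case: (leqP b a) => hab.
  rewrite subzn //= -{2}(subnK hab) exprD -mulrA qqb mulr1 //.
have -> : a%:Z - b%:Z = Negz (b - a).-1.
  rewrite NegzE prednK ?subn_gt0 // -subzn ?(ltnW hab) //; lia.
rewrite /= prednK ?subn_gt0 // -{2}(subnK (ltnW hab)) exprD mulrA mulrC mulrA.
by rewrite [qi ^+ a * _]mulrC qqb mul1r.
Qed.

Lemma int_diff (x : int) : exists a b : nat, x = a%:Z - b%:Z.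
Proof.
case: x => k; first by exists k, 0%N; rewrite subr0.
by exists 0%N, k.+1; rewrite NegzE sub0r.
Qed.

Lemma qpowD x y : qp (x + y) = qp x * qp y.
Proof.
have [a [b ->]] := int_diff x; have [c [d ->]] := int_diff y.
have -> : a%:Z - b%:Z + (c%:Z - d%:Z) = (a + c)%N%:Z - (b + d)%N%:Z.
  rewrite !PoszD; ring.
by rewrite !qpowE !exprD; ring.
Qed.

Lemma qpow0 : qp 0 = 1. Proof. by []. Qed.

Lemma qpowN x : qp (- x) * qp x = 1.
Proof. by rewrite -qpowD addNr. Qed.

(* Gaussian binomials with integer top *)
Fixpoint gbp (x k : nat) : R :=
  match x with
  | 0 => (k == 0)%:R
  | x'.+1 => match k with
             | 0 => 1
             | k'.+1 => qp (- (k'.+1)%:Z) * gbp x' k'.+1 + qp (x'%:Z - k'%:Z) * gbp x' k'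
             end
  end.

Fixpoint gbm (k : nat) : nat -> R :=
  match k with
  | 0 => fun _ => 1
  | k'.+1 => fix g (x : nat) :=
      match x with
      | 0 => 0
      | x'.+1 => qp (k'.+1)%:Z * (g x' - qp (- (x'.+1)%:Z - k'%:Z) * gbm k' x'.+1)
      end
  end.

Definition gb (X : int) (k : nat) : R :=
  match X with Posz x => gbp x k | Negz x => gbm k x.+1 end.

Lemma gb0 X : gb X 0 = 1.
Proof. by case: X => [[|x]|x]. Qed.

Lemma gbp_lt y k : (y < k)%N -> gbp y k = 0.
Proof.
elim: y k => [|y IH] [|k] //= hk.
by rewrite !IH ?mulr0 ?addr0 //; lia.
Qed.

Lemma gbp_id k : gbp k k = 1.
Proof.
elim: k => [|k IH] //=.
by rewrite gbp_lt // mulr0 add0r IH subrr mulr1.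
Qed.

Lemma gb_pascal X k :
  gb (X + 1) k.+1 = qp (- (k.+1)%:Z) * gb X k.+1 + qp (X - k%:Z) * gb X k.
Proof.
case: X => [x|[|x]].
- by rewrite /= addn1.
- rewrite /= mulrA (mulrC (qi ^+ _)) -exprMn hq expr1n mul1r sub0r.
  by rewrite addrC subrr.
- have -> : Negz x.+1 + 1 = Negz x.
    by rewrite !NegzE; lia.
  rewrite /= mulrA (mulrC (qi ^+ _)) -exprMn hq expr1n mul1r.
  by rewrite NegzE subrK.
Qed.

End QP.


Section Comb.
Variables (R : comPzRingType) (q qi : R).
Hypothesis hq : q * qi = 1.
Local Notation qp := (qpow q qi).
Variables (n i : nat).
Hypothesis hi : (i.+1 < n)%N.

Definition wt m (J : tens n m) : int := \sum_(k < m) cw i (J k).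

Definition econd m (J' J : tens n m) :=
  [forall k, (J' k == J k) ||
                  ((nat_of_ord (J k) == i.+1) && (nat_of_ord (J' k) == i))].
Definition fcond m (J' J : tens n m) :=
  [forall k, (J' k == J k) ||
                  ((nat_of_ord (J k) == i) && (nat_of_ord (J' k) == i.+1))].

Definition ecoef m r (J' J : tens n m) : R :=
    let S := diffset J' J in
    if [forall k, (J' k == J k) ||
                  ((nat_of_ord (J k) == i.+1) && (nat_of_ord (J' k) == i))]
       && (#|S| == r)
    then qp (- \sum_(k in S) \sum_(p : 'I_m | (k < p)%N && (p \notin S))
                   cw i (J p))
    else 0.

Definition fcoef m s (J' J : tens n m) : R :=
    let S := diffset J' J in
    if [forall k, (J' k == J k) ||
                  ((nat_of_ord (J k) == i) && (nat_of_ord (J' k) == i.+1))]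
       && (#|S| == s)
    then qp (\sum_(k in S) \sum_(p : 'I_m | (p < k)%N && (p \notin S))
                   cw i (J p))
    else 0.

Lemma e_mxE m l : e_mx q qi n m i l = mx_of (ecoef l).
Proof. by []. Qed.
Lemma f_mxE m l : f_mx q qi n m i l = mx_of (fcoef l).
Proof. by []. Qed.


Definition ext m (J0 : tens n m) (x : 'I_n) : tens n m.+1 :=
  [ffun k => if unlift ord_max k is Some k' then J0 k' else x].
Definition init m (J : tens n m.+1) : tens n m := [ffun k => J (lift ord_max k)].

Lemma ext_lift m (J0 : tens n m) x k : ext J0 x (lift ord_max k) = J0 k.
Proof. by rewrite ffunE liftK. Qed.
Lemma ext_max m (J0 : tens n m) x : ext J0 x ord_max = x.
Proof. by rewrite ffunE unlift_none. Qed.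
Lemma extK m (J : tens n m.+1) : ext (init J) (J ord_max) = J.
Proof.
apply/ffunP => k; rewrite ffunE; case: unliftP => [k'|] -> //.
by rewrite ffunE.
Qed.
Lemma init_ext m (J0 : tens n m) x : init (ext J0 x) = J0.
Proof. by apply/ffunP => k; rewrite ffunE ext_lift. Qed.

Lemma sum_tens_split m (F : tens n m.+1 -> R) :
  \sum_(J : tens n m.+1) F J = \sum_(J0 : tens n m) \sum_(x : 'I_n) F (ext J0 x).
Proof.
rewrite pair_bigA /=.
rewrite (reindex (fun p : tens n m * 'I_n => ext p.1 p.2)) //=.
exists (fun J => (init J, J ord_max)) => [[a x] _|J _] /=.
  by rewrite init_ext ext_max.
by rewrite extK.
Qed.


Lemma val_lift_max m (k : 'I_m) : nat_of_ord (lift ord_max k) = k.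
Proof. by rewrite lift_max. Qed.

Lemma bump_max m (k : 'I_m) : bump m k = k.
Proof. by rewrite /bump leqNgt ltn_ord. Qed.

Lemma sumZ_split m (F : 'I_m.+1 -> int) :
  \sum_(k < m.+1) F k = \sum_(k < m) F (lift ord_max k) + F ord_max.
Proof.
rewrite big_ord_recr /=; congr (_ + _); apply: eq_bigr => k _; congr F.
by apply: val_inj; rewrite /= /bump leqNgt ltn_ord.
Qed.
Lemma sumN_split m (F : 'I_m.+1 -> nat) :
  (\sum_(k < m.+1) F k = \sum_(k < m) F (lift ord_max k) + F ord_max)%N.
Proof.
rewrite big_ord_recr /=; congr (_ + _)%N; apply: eq_bigr => k _; congr F.
by apply: val_inj; rewrite /= /bump leqNgt ltn_ord.
Qed.
Lemma forall_split m (P : pred 'I_m.+1) :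
  [forall k, P k] = [forall k : 'I_m, P (lift ord_max k)] && P ord_max.
Proof.
apply/forallP/andP => [H|[/forallP H1 H2] k]; first by split => //; apply/forallP.
by case: (unliftP ord_max k) => [k'|] ->.
Qed.


Definition dcnt m (J' J : tens n m) : nat := \sum_(k < m) (J' k != J k).
Definition eexp m (J' J : tens n m) : int :=
  \sum_(k < m) (if J' k != J k then
     \sum_(p < m) (if (k < p)%N && (J' p == J p) then cw i (J p) else 0) else 0).
Definition fexp m (J' J : tens n m) : int :=
  \sum_(k < m) (if J' k != J k then
     \sum_(p < m) (if (p < k)%N && (J' p == J p) then cw i (J p) else 0) else 0).

Lemma card_diffset m (J' J : tens n m) : #|diffset J' J| = dcnt J' J.
Proof.
rewrite -sum1_card big_mkcond /dcnt /=; apply: eq_bigr => k _.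
by rewrite inE; case: (_ != _).
Qed.

Lemma ecoefE m r (J' J : tens n m) :
  ecoef r J' J = if econd J' J && (dcnt J' J == r) then qp (- eexp J' J) else 0.
Proof.
rewrite /ecoef card_diffset; congr (if _ then qp (- _) else _).
rewrite /eexp big_mkcond /=; apply: eq_bigr => k _; rewrite inE.
case: ifP => // _; rewrite big_mkcond; apply: eq_bigr => p _.
by rewrite inE negbK.
Qed.

Lemma fcoefE m s (J' J : tens n m) :
  fcoef s J' J = if fcond J' J && (dcnt J' J == s) then qp (fexp J' J) else 0.
Proof.
rewrite /fcoef card_diffset; congr (if _ then qp _ else _).
rewrite /fexp big_mkcond /=; apply: eq_bigr => k _; rewrite inE.
case: ifP => // _; rewrite big_mkcond; apply: eq_bigr => p _.
by rewrite inE negbK.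
Qed.

Lemma wt_ext m (a : tens n m) x : wt (ext a x) = wt a + cw i x.
Proof.
by rewrite /wt sumZ_split ext_max; congr (_ + _); apply: eq_bigr => k _; rewrite ext_lift.
Qed.

Lemma econd_ext m (a' a : tens n m) x' x :
  econd (ext a' x') (ext a x) =
  econd a' a && ((x' == x) || ((nat_of_ord x == i.+1) && (nat_of_ord x' == i))).
Proof.
rewrite /econd forall_split !ext_max; congr (_ && _).
by apply: eq_forallb => k; rewrite !ext_lift.
Qed.

Lemma fcond_ext m (a' a : tens n m) x' x :
  fcond (ext a' x') (ext a x) =
  fcond a' a && ((x' == x) || ((nat_of_ord x == i) && (nat_of_ord x' == i.+1))).
Proof.
rewrite /fcond forall_split !ext_max; congr (_ && _).
by apply: eq_forallb => k; rewrite !ext_lift.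
Qed.

Lemma dcnt_ext m (a' a : tens n m) x' x :
  dcnt (ext a' x') (ext a x) = (dcnt a' a + (x' != x))%N.
Proof.
rewrite /dcnt sumN_split !ext_max; congr (_ + _)%N.
by apply: eq_bigr => k _; rewrite !ext_lift.
Qed.

Lemma Posz_sum m (F : 'I_m -> nat) :
  (\sum_(k < m) F k)%N%:Z = \sum_(k < m) (F k)%:Z.
Proof. by rewrite (big_morph Posz PoszD (erefl (Posz 0))). Qed.

Lemma eexp_ext m (a' a : tens n m) x' x :
  eexp (ext a' x') (ext a x) =
  eexp a' a + (dcnt a' a)%:Z * (if x' == x then cw i x else 0).
Proof.
rewrite /eexp sumZ_split !ext_max.
have -> : (if x' != x then \sum_(p < m.+1) (if (@ord_max m < p)%N &&
     (ext a' x' p == ext a x p) then cw i (ext a x p) else 0) else 0) = 0.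
  case: ifP => // _; apply: big1 => p _.
  by rewrite ltnNge -ltnS ltn_ord.
rewrite addr0 /dcnt Posz_sum big_distrl /= -big_split /=; apply: eq_bigr => k _.
rewrite !ext_lift; case: ifP => _; last by rewrite mul0r addr0.
rewrite sumZ_split !ext_max mul1r; congr (_ + _).
  by apply: eq_bigr => p _; rewrite !ext_lift ?bump_max ?val_lift_max.
by rewrite ?bump_max ?val_lift_max ltn_ord /=.
Qed.

Lemma fexp_ext m (a' a : tens n m) x' x :
  fexp (ext a' x') (ext a x) =
  fexp a' a + (if x' != x then
    \sum_(p < m) (if a' p == a p then cw i (a p) else 0) else 0).
Proof.
rewrite /fexp sumZ_split !ext_max; congr (_ + _).
  apply: eq_bigr => k _; rewrite !ext_lift; case: ifP => // _.
  rewrite sumZ_split !ext_max.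
  have -> : (@ord_max m < lift ord_max k)%N = false.
    by rewrite val_lift_max ltnNge ltnW.
  rewrite addr0; apply: eq_bigr => p _; rewrite !ext_lift !val_lift_max //.
case: ifP => // _; rewrite sumZ_split ltnn addr0.
by apply: eq_bigr => p _; rewrite !ext_lift val_lift_max ltn_ord.
Qed.


Definition xi : 'I_n := Ordinal (ltnW hi).
Definition xi1 : 'I_n := Ordinal hi.

Lemma eq_xi (x : 'I_n) : (nat_of_ord x == i) = (x == xi).
Proof. by []. Qed.
Lemma eq_xi1 (x : 'I_n) : (nat_of_ord x == i.+1) = (x == xi1).
Proof. by []. Qed.
Lemma xi_xi1 (x : 'I_n) : (x == xi1) && (x == xi) = false.
Proof. by apply/andP => [[/eqP -> /eqP/(congr1 val)/=]]; lia. Qed.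
Lemma xi_xi1' (x : 'I_n) : (x == xi) && (x == xi1) = false.
Proof. by rewrite andbC xi_xi1. Qed.

Lemma cw_xi : cw i xi = 1.
Proof. by rewrite /cw /= eqxx; have -> : (i == i.+1) = false by lia. Qed.
Lemma cw_xi1 : cw i xi1 = -1.
Proof. by rewrite /cw /= eqxx; have -> : (i.+1 == i) = false by lia. Qed.

Lemma ecoef_ext m r (a' a : tens n m) x' x :
  ecoef r (ext a' x') (ext a x) =
  (x' == x)%:R * qp (- (r%:Z * cw i x)) * ecoef r a' a +
  ((x == xi1) && (x' == xi) && (0 < r)%N)%:R * ecoef r.-1 a' a.
Proof.
rewrite !ecoefE econd_ext dcnt_ext eexp_ext eq_xi eq_xi1.
case: eqP => [->|ne].
  rewrite /= andbT addn0 xi_xi1 /= mul1r mul0r addr0.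
  case: ifP => [/andP[_ /eqP <-]|_]; last by rewrite mulr0.
  by rewrite opprD qpowD // mulrC.
rewrite /= (_ : false%:R = 0) // !mul0r add0r mulr0 addr0 addn1.
case: ((x == xi1) && (x' == xi)); last by rewrite andbF mul0r.
rewrite andbT; case: r => [|r] /=; first by rewrite andbF mul0r.
by rewrite mul1r eqSS.
Qed.

Lemma fcond_eqsum m (a' a : tens n m) : fcond a' a ->
  \sum_(p < m) (if a' p == a p then cw i (a p) else 0) = wt a - (dcnt a' a)%:Z.
Proof.
move=> /forallP H; rewrite /wt /dcnt Posz_sum -sumrB; apply: eq_bigr => p _.
move: (H p); case: eqP => [_ _|_ /= /andP[/eqP hp _]]; first by rewrite subr0.
by rewrite /cw hp eqxx (_ : (i == i.+1) = false) //; lia.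
Qed.

Lemma fcoef_ext m s (a' a : tens n m) x' x :
  fcoef s (ext a' x') (ext a x) =
  (x' == x)%:R * fcoef s a' a +
  ((x == xi) && (x' == xi1) && (0 < s)%N)%:R * qp (wt a - (s.-1)%:Z) * fcoef s.-1 a' a.
Proof.
rewrite !fcoefE fcond_ext dcnt_ext fexp_ext eq_xi eq_xi1.
case: eqP => [->|ne].
  rewrite /= andbT addn0 xi_xi1' /= mul1r !mul0r !addr0.
  by [].
rewrite /= (_ : false%:R = 0) // !mul0r add0r addn1.
case: ((x == xi) && (x' == xi1)); last by rewrite andbF !mul0r.
rewrite andbT; case: s => [|s] /=; first by rewrite andbF !mul0r.
rewrite mul1r eqSS; case: ifP => [/andP[hf /eqP hd]|]; last by rewrite mulr0.
by rewrite fcond_eqsum // hd qpowD // mulrC.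
Qed.


Lemma natr_and (b1 b2 : bool) : (b1 && b2)%:R = b1%:R * b2%:R :> R.
Proof. by case: b1; case: b2; rewrite ?mulr1 ?mulr0. Qed.

Lemma sum_eqL (c : 'I_n) (F : 'I_n -> R) : \sum_(y : 'I_n) (y == c)%:R * F y = F c.
Proof.
rewrite (bigD1 c) //= eqxx mul1r big1 ?addr0 // => y /negbTE ->.
by rewrite mul0r.
Qed.

Lemma ecoef_wt m r (a' a : tens n m) : ecoef r a' a != 0 -> wt a' = wt a + (2 * r)%N%:Z.
Proof.
rewrite ecoefE; case: ifP => [/andP[/forallP H /eqP <-] _|]; last by rewrite eqxx.
apply/eqP; rewrite -subr_eq0 opprD addrA /wt -sumrB /dcnt PoszM Posz_sum mulr_sumr -sumrB.
apply/eqP; apply: big1 => p _; move: (H p).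
case: eqP => [-> _|_ /= /andP[/eqP h1 /eqP h2]]; first by rewrite !subrr.
rewrite /cw h1 h2 eqxx; rewrite (_ : (i == i.+1) = false); last by lia.
rewrite (_ : (i.+1 == i) = false); last by lia.
by rewrite eqxx.
Qed.

Lemma fcoef_wt m s (a' a : tens n m) : fcoef s a' a != 0 -> wt a' = wt a - (2 * s)%N%:Z.
Proof.
rewrite fcoefE; case: ifP => [/andP[/forallP H /eqP <-] _|]; last by rewrite eqxx.
apply/eqP; rewrite -subr_eq0 opprD opprK addrA /wt -sumrB /dcnt PoszM Posz_sum mulr_sumr -big_split.
apply/eqP; apply: big1 => p _; move: (H p).
case: eqP => [-> _|_ /= /andP[/eqP h1 /eqP h2]]; first by rewrite !subrr.
rewrite /cw h1 h2 eqxx; rewrite (_ : (i == i.+1) = false); last by lia.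
rewrite (_ : (i.+1 == i) = false); last by lia.
rewrite !eqxx; lia.
Qed.

Definition L m r s (a' a : tens n m) : R := \sum_(b : tens n m) ecoef r a' b * fcoef s b a.
Definition M m s' r' (g : int -> R) (a' a : tens n m) : R :=
  \sum_(b : tens n m) fcoef s' a' b * g (wt b) * ecoef r' b a.

Lemma inner_L m r s (a' b a : tens n m) x' x :
  \sum_(y : 'I_n) ecoef r (ext a' x') (ext b y) * fcoef s (ext b y) (ext a x) =
  (x' == x)%:R * qp (- (r%:Z * cw i x)) * (ecoef r a' b * fcoef s b a)
  + ((x == xi) && (x' == xi1) && (0 < s)%N)%:R * qp (- (r%:Z * cw i xi1)) *
      qp (wt a - (s.-1)%:Z) * (ecoef r a' b * fcoef s.-1 b a)
  + ((x == xi1) && (x' == xi) && (0 < r)%N)%:R * (ecoef r.-1 a' b * fcoef s b a)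
  + ((x == xi) && (x' == xi) && (0 < r)%N && (0 < s)%N)%:R * qp (wt a - (s.-1)%:Z) *
      (ecoef r.-1 a' b * fcoef s.-1 b a).
Proof.
under eq_bigr do rewrite ecoef_ext fcoef_ext.
set E0 := ecoef r a' b; set E1 := ecoef r.-1 a' b.
set F0 := fcoef s b a; set F1 := fcoef s.-1 b a; set W := qp (wt a - (s.-1)%:Z).
rewrite (eq_bigr (fun y =>
   (y == x)%:R * ((x' == y)%:R * qp (- (r%:Z * cw i y)) * E0 * F0)
 + (y == xi1)%:R * ((x' == y)%:R * qp (- (r%:Z * cw i y)) * E0 * (x == xi)%:R * (0 < s)%N%:R * W * F1)
 + (y == x)%:R * ((y == xi1)%:R * (x' == xi)%:R * (0 < r)%N%:R * E1 * F0)
 + (y == xi1)%:R * ((x' == xi)%:R * (0 < r)%N%:R * E1 * (x == xi)%:R * (y == xi1)%:R * (0 < s)%N%:R * W * F1)));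
  last by move=> y _; rewrite !natr_and; ring.
rewrite !big_split /= !sum_eqL eqxx !natr_and (_ : true%:R = 1 :> R) //; ring.
Qed.


Lemma inner_M m s' r' (g : int -> R) (a' b a : tens n m) x' x :
  \sum_(y : 'I_n) fcoef s' (ext a' x') (ext b y) * g (wt (ext b y)) * ecoef r' (ext b y) (ext a x) =
  (x' == x)%:R * qp (- (r'%:Z * cw i x)) * (fcoef s' a' b * g (wt b + cw i x) * ecoef r' b a)
  + ((x' == xi) && (x == xi1) && (0 < r')%N)%:R * (fcoef s' a' b * g (wt b + 1) * ecoef r'.-1 b a)
  + ((x == xi) && (x' == xi1) && (0 < s')%N)%:R * qp (- (r'%:Z * cw i x)) *
      (qp (wt b - (s'.-1)%:Z) * fcoef s'.-1 a' b * g (wt b + 1) * ecoef r' b a)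
  + ((x' == xi1) && (x == xi1) && (0 < s')%N && (0 < r')%N)%:R *
      (qp (wt b - (s'.-1)%:Z) * fcoef s'.-1 a' b * g (wt b + 1) * ecoef r'.-1 b a).
Proof.
under eq_bigr do rewrite fcoef_ext ecoef_ext wt_ext.
set E0 := ecoef r' b a; set E1 := ecoef r'.-1 b a.
set F0 := fcoef s' a' b; set F1 := fcoef s'.-1 a' b; set W := qp (wt b - (s'.-1)%:Z).
rewrite (eq_bigr (fun y =>
   (y == x)%:R * ((x' == y)%:R * qp (- (r'%:Z * cw i x)) * F0 * g (wt b + cw i y) * E0)
 + (y == xi)%:R * ((x' == y)%:R * F0 * g (wt b + cw i y) * (x == xi1)%:R * (0 < r')%N%:R * E1)
 + (y == xi)%:R * ((x' == xi1)%:R * (0 < s')%N%:R * W * F1 * g (wt b + cw i y) * (y == x)%:R * qp (- (r'%:Z * cw i x)) * E0)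
 + (y == xi)%:R * ((x' == xi1)%:R * (0 < s')%N%:R * W * F1 * g (wt b + cw i y) * (x == xi1)%:R * (y == xi)%:R * (0 < r')%N%:R * E1)));
  last by move=> y _; rewrite !natr_and; ring.
rewrite !big_split /= !sum_eqL eqxx !natr_and (_ : true%:R = 1 :> R) // cw_xi.
rewrite [xi == x]eq_sym; ring.
Qed.


Lemma L_ext m r s (a' a : tens n m) x' x :
  L r s (ext a' x') (ext a x) =
  (x' == x)%:R * qp (- (r%:Z * cw i x)) * L r s a' a
  + ((x == xi) && (x' == xi1) && (0 < s)%N)%:R * qp (- (r%:Z * cw i xi1)) *
      qp (wt a - (s.-1)%:Z) * L r s.-1 a' a
  + ((x == xi1) && (x' == xi) && (0 < r)%N)%:R * L r.-1 s a' a
  + ((x == xi) && (x' == xi) && (0 < r)%N && (0 < s)%N)%:R * qp (wt a - (s.-1)%:Z) *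
      L r.-1 s.-1 a' a.
Proof.
rewrite /L sum_tens_split; under eq_bigr do rewrite inner_L.
by rewrite !big_split !mulr_sumr.
Qed.

Lemma M_ext m s' r' (g : int -> R) (a' a : tens n m) x' x :
  M s' r' g (ext a' x') (ext a x) =
  (x' == x)%:R * qp (- (r'%:Z * cw i x)) * M s' r' (fun w => g (w + cw i x)) a' a
  + ((x' == xi) && (x == xi1) && (0 < r')%N)%:R * M s' r'.-1 (fun w => g (w + 1)) a' a
  + ((x == xi) && (x' == xi1) && (0 < s')%N)%:R * qp (- (r'%:Z * cw i x)) *
      M s'.-1 r' (fun w => qp (w - (s'.-1)%:Z) * g (w + 1)) a' a
  + ((x' == xi1) && (x == xi1) && (0 < s')%N && (0 < r')%N)%:R *
      M s'.-1 r'.-1 (fun w => qp (w - (s'.-1)%:Z) * g (w + 1)) a' a.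
Proof.
rewrite /M sum_tens_split; under eq_bigr do rewrite inner_M.
rewrite !big_split !mulr_sumr; congr (_ + _ + _ + _); apply: eq_bigr => b _; ring.
Qed.

Definition gfun (r s j : nat) : int -> R :=
  fun w => gb q qi (w + (2 * j)%N%:Z - r%:Z - s%:Z) j.

Definition Rhs m r s (a' a : tens n m) : R :=
  \sum_(j < r.+1) (j <= s)%N%:R * M (s - j)%N (r - j)%N (gfun r s j) a' a.

Lemma tens0_eq (a b : tens n 0) : a = b.
Proof. by apply/ffunP => [[]]. Qed.

Lemma sum_tens0 (F : tens n 0 -> R) (a : tens n 0) : \sum_(b : tens n 0) F b = F a.
Proof. by rewrite (big_pred1 a) // => b; rewrite /= (tens0_eq b a) eqxx. Qed.

Lemma ecoef0 r (a' a : tens n 0) : ecoef r a' a = (r == 0)%N%:R.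
Proof.
rewrite ecoefE /econd /dcnt /eexp !big_ord0.
have -> : [forall k : 'I_0, (a' k == a k) || (nat_of_ord (a k) == i.+1) && (nat_of_ord (a' k) == i)].
  by apply/forallP => [[]].
by rewrite /= eq_sym; case: (r == 0)%N.
Qed.

Lemma fcoef0 s (a' a : tens n 0) : fcoef s a' a = (s == 0)%N%:R.
Proof.
rewrite fcoefE /fcond /dcnt /fexp !big_ord0.
have -> : [forall k : 'I_0, (a' k == a k) || (nat_of_ord (a k) == i) && (nat_of_ord (a' k) == i.+1)].
  by apply/forallP => [[]].
by rewrite /= eq_sym; case: (s == 0)%N.
Qed.

Lemma wt0 (a : tens n 0) : wt a = 0.
Proof. by rewrite /wt big_ord0. Qed.

Lemma key0 r s (a' a : tens n 0) : L r s a' a = Rhs r s a' a.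
Proof.
rewrite /L /Rhs /M (sum_tens0 _ a).
under eq_bigr do rewrite (sum_tens0 _ a) ecoef0 fcoef0 wt0.
rewrite ecoef0 fcoef0 /gfun.
case: r => [|r].
  by rewrite big_ord1 /= subn0 gb0 !mulr1 mul1r.
rewrite (_ : (r.+1 == 0)%N = false) // mul0r; apply/esym/big1 => j _.
case: (ltnP j r.+1) => hj.
  by rewrite (_ : (r.+1 - j == 0)%N = false) ?mulr0 //; lia.
case: (boolP (j <= s)%N) => hjs; last by rewrite mul0r.
case: (boolP (s - j == 0)%N) => hsj; last first.
  by rewrite (_ : false%:R = 0 :> R) // !mul0r mulr0.
have ej : nat_of_ord j = r.+1 by have := ltn_ord j; lia.
have es : s = r.+1 by move/eqP: hsj; lia.
rewrite ej es (_ : (2 * r.+1)%N%:Z - r.+1%:Z - r.+1%:Z = 0); last by lia.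
by rewrite (_ : gb q qi 0 r.+1 = 0) // mulr0 mul0r mulr0.
Qed.


Lemma M_congr m s' r' g h (a' a : tens n m) :
  (forall w, w = wt a + (2 * r')%N%:Z -> g w = h w) -> M s' r' g a' a = M s' r' h a' a.
Proof.
move=> H; apply: eq_bigr => b _; case: (eqVneq (ecoef r' b a) 0) => [->|nz].
  by rewrite !mulr0.
by rewrite (H _ (ecoef_wt nz)).
Qed.

Lemma M_scale m s' r' g c (a' a : tens n m) :
  c * M s' r' g a' a = M s' r' (fun w => c * g w) a' a.
Proof. by rewrite /M mulr_sumr; apply: eq_bigr => b _ /=; ring. Qed.

Lemma M_add m s' r' g h (a' a : tens n m) :
  M s' r' g a' a + M s' r' h a' a = M s' r' (fun w => g w + h w) a' a.
Proof. by rewrite /M -big_split; apply: eq_bigr => b _ /=; ring. Qed.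

Lemma natrT : true%:R = 1 :> R. Proof. by []. Qed.
Lemma natrF : false%:R = 0 :> R. Proof. by []. Qed.
Lemma xi_neq : (xi == xi1) = false.
Proof. by apply/eqP => /(congr1 val) /=; lia. Qed.
Lemma xi1_neq : (xi1 == xi) = false.
Proof. by rewrite eq_sym xi_neq. Qed.
Lemma cw_other (x : 'I_n) : x != xi -> x != xi1 -> cw i x = 0.
Proof.
move=> h0 h1; rewrite /cw eq_xi eq_xi1 (negbTE h0) (negbTE h1) //.
Qed.

Lemma gfun0 r s w : gfun r s 0 w = 1.
Proof. by rewrite /gfun gb0. Qed.

Lemma sum_add_eq k (F G H : 'I_k -> R) :
  (forall j, F j + G j = H j) -> \sum_(j < k) F j + \sum_(j < k) G j = \sum_(j < k) H j.
Proof. by move=> E; rewrite -big_split; apply: eq_bigr => j _; exact: E. Qed.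

Section Step.
Variable m : nat.
Hypothesis IH : forall r s (a' a : tens n m), L r s a' a = Rhs r s a' a.

Lemma caseB r s (b' b : tens n m) :
  qp (- (r%:Z * 1)) * L r s b' b +
  ((0 < r)%N && (0 < s)%N)%:R * qp (wt b - (s.-1)%:Z) * L r.-1 s.-1 b' b =
  \sum_(j < r.+1) (j <= s)%N%:R *
     (qp (- ((r - j)%N%:Z * 1)) * M (s - j)%N (r - j)%N (fun w => gfun r s j (w + 1)) b' b).
Proof.
rewrite !IH /Rhs.
case: r => [|r].
  rewrite (_ : ((0 < 0)%N && (0 < s)%N) = false) // natrF !mul0r addr0 !big_ord1 mulrCA; congr (_ * (_ * _)).
  by apply: M_congr => w _; rewrite !gfun0.
rewrite (big_ord_recl r.+1) [RHS](big_ord_recl r.+1).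
rewrite (_ : (0 < r.+1)%N && (0 < s)%N = (0 < s)%N) // mulrDr -addrA.
congr (_ + _).
  rewrite mulrCA; congr (_ * (_ * _)).
  by apply: M_congr => w _; rewrite !gfun0.
rewrite !mulr_sumr; apply: sum_add_eq => j.
rewrite !lift0.
case: s => [|s]; first by rewrite /= natrF !mul0r !mulr0 add0r.
rewrite (_ : s.+1.-1 = s) // (_ : (0 < s.+1)%N = true) // ltnS !subSS.
case: (boolP (j <= s)%N) => hjs; last by rewrite natrF !mul0r !mulr0 add0r.
rewrite natrT !mul1r !M_scale M_add; apply: M_congr => w hw.
have hj : (j <= r)%N by have := ltn_ord j; lia.
rewrite /gfun.
rewrite (_ : w + 1 + (2 * j.+1)%N%:Z - r.+1%:Z - s.+1%:Z =
   (w + (2 * j)%N%:Z - r%:Z - s%:Z) + 1); last by lia.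
rewrite (_ : w + (2 * j.+1)%N%:Z - r.+1%:Z - s.+1%:Z =
   (w + (2 * j)%N%:Z - r%:Z - s%:Z)); last by lia.
rewrite gb_pascal // mulrDr !mulrA -!qpowD //.
congr (qp _ * _ + qp _ * _); lia.
Qed.

Lemma caseD r s (b' b : tens n m) :
  (0 < s)%N%:R * qp (- (r%:Z * -1)) * qp (wt b - (s.-1)%:Z) * L r s.-1 b' b =
  \sum_(j < r.+1) (j <= s)%N%:R *
     ((0 < s - j)%N%:R * qp (- ((r - j)%N%:Z * 1)) *
      M (s - j).-1 (r - j)%N (fun w => qp (w - ((s - j).-1)%:Z) * gfun r s j (w + 1)) b' b).
Proof.
rewrite IH /Rhs.
case: s => [|s].
  rewrite natrF !mul0r; apply/esym/big1 => j _.
  by rewrite !mul0r mulr0.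
rewrite (_ : (0 < s.+1)%N = true) // natrT mul1r (_ : s.+1.-1 = s) // !mulr_sumr.
apply: eq_bigr => j _.
case: (leqP j s) => hjs; last first.
  by rewrite (_ : (0 < s.+1 - j)%N = false) ?natrF ?mul0r ?mulr0 //; lia.
rewrite (_ : (j <= s.+1)%N = true) ?natrT ?mul1r; last by lia.
rewrite (_ : (0 < s.+1 - j)%N = true) ?natrT ?mul1r; last by lia.
rewrite (_ : (s.+1 - j).-1 = (s - j)%N); last by lia.
rewrite -mulrA.
have hj : (j <= r)%N by have := ltn_ord j; lia.
rewrite !M_scale; apply: M_congr => w hw.
rewrite /gfun (_ : w + 1 + (2 * j)%N%:Z - r%:Z - s.+1%:Z = w + (2 * j)%N%:Z - r%:Z - s%:Z);
  last by lia.
rewrite !mulrA -!qpowD //; congr (qp _ * _); lia.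
Qed.

Lemma caseE r s (b' b : tens n m) :
  (0 < r)%N%:R * L r.-1 s b' b =
  \sum_(j < r.+1) (j <= s)%N%:R *
     ((0 < r - j)%N%:R * M (s - j)%N (r - j).-1 (fun w => gfun r s j (w + 1)) b' b).
Proof.
rewrite IH /Rhs.
case: r => [|r].
  rewrite natrF !mul0r; apply/esym/big1 => j _.
  by rewrite !mul0r mulr0.
rewrite (_ : (0 < r.+1)%N = true) // natrT mul1r (_ : r.+1.-1 = r) //.
rewrite [RHS]big_ord_recr /=.
rewrite (_ : (0 < r.+1 - r.+1)%N = false); last by lia.
rewrite natrF mul0r mulr0 addr0.
apply: eq_bigr => j _.
have hj : (j < r.+1)%N by [].
rewrite (_ : (0 < r.+1 - j)%N = true) ?natrT ?mul1r; last by lia.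
rewrite (_ : (r.+1 - j).-1 = (r - j)%N); last by lia.
congr (_ * _); apply: M_congr => w _.
rewrite /gfun; congr (gb _ _ _ _); lia.
Qed.

Lemma caseC r s (b' b : tens n m) :
  qp (- (r%:Z * -1)) * L r s b' b =
  \sum_(j < r.+1) (j <= s)%N%:R *
     (qp (- ((r - j)%N%:Z * -1)) * M (s - j)%N (r - j)%N (fun w => gfun r s j (w + -1)) b' b
      + ((0 < s - j)%N && (0 < r - j)%N)%:R *
        M (s - j).-1 (r - j).-1 (fun w => qp (w - ((s - j).-1)%:Z) * gfun r s j (w + 1)) b' b).
Proof.
rewrite IH /Rhs.
under [RHS]eq_bigr do rewrite mulrDr.
rewrite big_split /= [X in _ = _ + X]big_ord_recr /=.
rewrite (_ : (0 < r - r)%N = false); last by lia.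
rewrite andbF natrF mul0r mulr0 addr0.
case: r => [|r].
  rewrite !big_ord1 big_ord0 addr0 mulrCA; congr (_ * (_ * _)).
  by apply: M_congr => w _; rewrite !gfun0.
rewrite (big_ord_recl r.+1) [X in _ = X + _](big_ord_recl r.+1) mulrDr -addrA.
congr (_ + _).
  rewrite mulrCA; congr (_ * (_ * _)).
  by apply: M_congr => w _; rewrite !gfun0.
rewrite mulr_sumr; apply/esym; apply: sum_add_eq => j.
rewrite !lift0.
have hj : (j <= r)%N by have := ltn_ord j; lia.
rewrite (_ : (0 < r.+1 - j)%N = true); last by lia.
rewrite andbT (_ : (r.+1 - j).-1 = (r - j)%N); last by lia.
rewrite (_ : (r.+1 - j.+1)%N = (r - j)%N); last by lia.
case: (ltnP j s) => hjs; last first.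
  rewrite (_ : (0 < s - j)%N = false); last by lia.
  by rewrite natrF !mul0r !mulr0 add0r.
rewrite (_ : (j <= s)%N = true); last by lia.
rewrite (_ : (0 < s - j)%N = true); last by lia.
rewrite (_ : (s - j).-1 = (s - j.+1)%N); last by lia.
rewrite natrT !mul1r M_scale M_add M_scale; apply: M_congr => w _.
rewrite /gfun.
rewrite (_ : w + (2 * j.+1)%N%:Z - r.+1%:Z - s%:Z =
   (w + (2 * j)%N%:Z + 1 - r.+1%:Z - s%:Z) + 1); last by lia.
rewrite (_ : w + -1 + (2 * j.+1)%N%:Z - r.+1%:Z - s%:Z =
   (w + (2 * j)%N%:Z + 1 - r.+1%:Z - s%:Z)); last by lia.
rewrite (_ : w + 1 + (2 * j)%N%:Z - r.+1%:Z - s%:Z =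
   (w + (2 * j)%N%:Z + 1 - r.+1%:Z - s%:Z)); last by lia.
rewrite gb_pascal // mulrDr !mulrA -!qpowD //.
congr (qp _ * _ + qp _ * _); lia.
Qed.

Lemma caseO r s (b' b : tens n m) c :
  c * qp (- 0) * L r s b' b =
  \sum_(j < r.+1) (j <= s)%N%:R *
     (c * qp (- 0) * M (s - j)%N (r - j)%N (fun w => gfun r s j (w + 0)) b' b).
Proof.
rewrite IH /Rhs mulr_sumr; apply: eq_bigr => j _.
rewrite mulrCA; congr (_ * _).
by congr (_ * _); apply: M_congr => w _; rewrite addr0.
Qed.

End Step.

Lemma key m r s (a' a : tens n m) : L r s a' a = Rhs r s a' a.
Proof.
elim: m r s a' a => [|m IH] r s a' a; first exact: key0.
rewrite -(extK a') -(extK a).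
move: (init a') (a' ord_max) (init a) (a ord_max) => b' x' b x.
rewrite L_ext /Rhs.
under eq_bigr do rewrite M_ext.
have [->|nx0] := eqVneq x xi.
  have [->|nx'0] := eqVneq x' xi.
    rewrite xi_neq cw_xi /= ?andbF ?natrF ?natrT ?mul0r ?mulr0 ?add0r ?addr0 ?mul1r.
    under eq_bigr do rewrite ?andbF ?natrF ?natrT ?mul0r ?mulr0 ?add0r ?addr0 ?mul1r.
    exact: caseB.
  have [_|nx'1] := eqVneq x' xi1.
    rewrite ?xi_neq ?xi1_neq ?cw_xi ?cw_xi1 ?andbF ?andTb ?andbT ?natrF ?natrT ?mul0r ?mulr0 ?add0r ?addr0 ?mul1r.
    under eq_bigr do rewrite ?andbF ?andTb ?andbT ?natrF ?natrT ?mul0r ?mulr0 ?add0r ?addr0 ?mul1r.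
    exact: caseD.
  rewrite ?xi_neq ?xi1_neq ?andbF ?andFb ?natrF ?mul0r ?add0r ?addr0.
  under eq_bigr do rewrite ?andbF ?andFb ?natrF ?mul0r ?mulr0 ?add0r ?addr0.
  by apply/esym/big1 => j _; rewrite mulr0.
have [->|nx1] := eqVneq x xi1.
  have [ex'|nx'1] := eqVneq x' xi1.
    rewrite ?ex' ?xi_neq ?xi1_neq ?cw_xi ?cw_xi1 ?andbF ?andFb ?andTb ?andbT ?natrF ?natrT ?mul0r ?mulr0 ?add0r ?addr0 ?mul1r.
    under eq_bigr do rewrite ?andbF ?andFb ?andTb ?andbT ?natrF ?natrT ?mul0r ?mulr0 ?add0r ?addr0 ?mul1r.
    exact: caseC.
  have [ex'|nx'0] := eqVneq x' xi.
    rewrite ?ex' ?xi_neq ?xi1_neq ?cw_xi ?cw_xi1 ?andbF ?andFb ?andTb ?andbT ?natrF ?natrT ?mul0r ?mulr0 ?add0r ?addr0 ?mul1r.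
    under eq_bigr do rewrite ?andbF ?andFb ?andTb ?andbT ?natrF ?natrT ?mul0r ?mulr0 ?add0r ?addr0 ?mul1r.
    exact: caseE.
  rewrite ?xi_neq ?xi1_neq ?andbF ?andFb ?natrF ?mul0r ?add0r ?addr0.
  under eq_bigr do rewrite ?andbF ?andFb ?natrF ?mul0r ?mulr0 ?add0r ?addr0.
  by apply/esym/big1 => j _; rewrite mulr0.
rewrite (cw_other nx0 nx1) ?andbF ?andFb ?natrF ?mul0r ?mulr0 ?add0r ?addr0.
under eq_bigr do rewrite ?andbF ?andFb ?natrF ?mul0r ?mulr0 ?add0r ?addr0.
exact: caseO.
Qed.

End Comb.


Section Alg.
Variables (R : comPzRingType) (q qi : R).
Hypothesis hq : q * qi = 1.
Local Notation qp := (qpow q qi).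
Variables (n m : nat).

Local Notation T := (tens n m).
Local Notation Mx := (EndV R n m).

Lemma sum_enum (F : T -> R) : \sum_(c < N n m) F (enum_val c) = \sum_(J : T) F J.
Proof. by rewrite -(big_enum_val (A := {: T})). Qed.

Lemma mx_ofE (f : T -> T -> R) a b : mx_of f a b = f (enum_val a) (enum_val b).
Proof. by rewrite mxE. Qed.

Lemma mx_of_mul (f g : T -> T -> R) :
  mx_of f *m mx_of g = mx_of (fun J' J => \sum_(J'' : T) f J' J'' * g J'' J).
Proof.
apply/matrixP => a b; rewrite !mxE -sum_enum; apply: eq_bigr => c _.
by rewrite !mxE.
Qed.

Lemma mx_of_add (f g : T -> T -> R) :
  mx_of f + mx_of g = mx_of (fun J' J => f J' J + g J' J).
Proof. by apply/matrixP => a b; rewrite !mxE. Qed.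

Lemma mx_of_scale c (f : T -> T -> R) :
  c *: mx_of f = mx_of (fun J' J => c * f J' J).
Proof. by apply/matrixP => a b; rewrite !mxE. Qed.

Lemma mx_of_one : (1%:M : Mx) = mx_of (fun J' J => (J' == J)%:R).
Proof.
apply/matrixP => a b; rewrite !mxE (inj_eq enum_val_inj) //.
Qed.

Lemma mx_of_eq (f g : T -> T -> R) : (forall J' J, f J' J = g J' J) -> mx_of f = mx_of g.
Proof. by move=> E; apply/matrixP => a b; rewrite !mxE E. Qed.

Definition Dg (phi : T -> R) : Mx := mx_of (fun J' J => if J' == J then phi J else 0).

Lemma Dg_mul phi psi : Dg phi *m Dg psi = Dg (fun J => phi J * psi J).
Proof.
rewrite mx_of_mul; apply: mx_of_eq => J' J.
rewrite (bigD1 J) //= eqxx big1 ?addr0.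
  by case: eqP; rewrite ?mul0r ?mulr1.
by move=> K /negbTE nK; rewrite nK mulr0.
Qed.

Lemma Dg_add phi psi : Dg phi + Dg psi = Dg (fun J => phi J + psi J).
Proof. by rewrite mx_of_add; apply: mx_of_eq => J' J; case: eqP; rewrite ?addr0. Qed.

Lemma Dg_scale c phi : c *: Dg phi = Dg (fun J => c * phi J).
Proof. by rewrite mx_of_scale; apply: mx_of_eq => J' J; case: eqP; rewrite ?mulr0. Qed.

Lemma Dg_one : Dg (fun _ => 1) = 1%:M.
Proof. by rewrite mx_of_one; apply: mx_of_eq => J' J; case: eqP. Qed.

Lemma Dg_eq phi psi : (forall J, phi J = psi J) -> Dg phi = Dg psi.
Proof. by move=> E; apply: mx_of_eq => J' J; rewrite E. Qed.

Variable G : Mx -> Prop.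
Local Notation GA := (gen_alg G).

Lemma ga_zero : GA 0.
Proof. by rewrite -(scale0r (1%:M : Mx)); apply: ga_scale; apply: ga_one. Qed.

Lemma ga_sub A B : GA A -> GA B -> GA (A - B).
Proof.
move=> hA hB; rewrite -scaleN1r; apply: ga_add => //; exact: ga_scale.
Qed.

Lemma ga_sum k (F : 'I_k -> Mx) : (forall j, GA (F j)) -> GA (\sum_(j < k) F j).
Proof.
elim: k F => [|k IH] F H; first by rewrite big_ord0; exact: ga_zero.
by rewrite big_ord_recr /=; apply: ga_add; [apply: IH|].
Qed.


Lemma mx_of_sum k (F : 'I_k -> T -> T -> R) :
  \sum_(j < k) mx_of (F j) = mx_of (fun J' J => \sum_(j < k) F j J' J).
Proof. by apply/matrixP => a b; rewrite summxE !mxE; apply: eq_bigr => j _; rewrite mxE. Qed.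

Lemma sum_if_eq (J' : T) (f g : T -> R) :
  \sum_(K : T) (if J' == K then f K else 0) * g K = f J' * g J'.
Proof.
rewrite (bigD1 J') //= eqxx big1 ?addr0 // => K hK.
by rewrite eq_sym (negbTE hK) mul0r.
Qed.

Lemma dcnt_eq0 (J' J : T) : (dcnt J' J == 0)%N = (J' == J).
Proof.
rewrite /dcnt sum_nat_eq0; apply/forallP/eqP => [H|-> k]; last by rewrite eqxx.
by apply/ffunP => k; move: (H k); rewrite eqb0 negbK => /eqP.
Qed.
End Alg.

Section AlgI.
Variables (R : comPzRingType) (q qi : R).
Hypothesis hq : q * qi = 1.
Local Notation qp := (qpow q qi).
Variables (n m i : nat).
Hypothesis hi : (i.+1 < n)%N.
Local Notation T := (tens n m).
Local Notation Mx := (EndV R n m).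
Local Notation GA := (gen_alg (U'_gens q qi (n:=n) (m:=m))).

Lemma ecoef_0 (J' J : T) : ecoef q qi i 0 J' J = (J' == J)%:R.
Proof.
rewrite ecoefE dcnt_eq0; case: eqP => [->|]; last by rewrite andbF.
rewrite andbT (_ : econd i J J = true); last by apply/forallP => k; rewrite eqxx.
by rewrite /eexp big1 // => k _; rewrite eqxx.
Qed.

Lemma fcoef_0 (J' J : T) : fcoef q qi i 0 J' J = (J' == J)%:R.
Proof.
rewrite fcoefE dcnt_eq0; case: eqP => [->|]; last by rewrite andbF.
rewrite andbT (_ : fcond i J J = true); last by apply/forallP => k; rewrite eqxx.
by rewrite /fexp big1 // => k _; rewrite eqxx.
Qed.

Lemma e_mx0 : e_mx q qi n m i 0 = 1%:M.
Proof. by rewrite e_mxE mx_of_one; apply: mx_of_eq => J' J; rewrite ecoef_0. Qed.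
Lemma f_mx0 : f_mx q qi n m i 0 = 1%:M.
Proof. by rewrite f_mxE mx_of_one; apply: mx_of_eq => J' J; rewrite fcoef_0. Qed.

Lemma EF_identity t :
  e_mx q qi n m i t *m f_mx q qi n m i t =
  \sum_(j < t.+1) Dg (fun J : T => gb q qi (wt i J) j) *m
      (f_mx q qi n m i (t - j) *m e_mx q qi n m i (t - j)).
Proof.
rewrite !e_mxE !f_mxE.
under eq_bigr do rewrite !e_mxE !f_mxE !mx_of_mul.
rewrite mx_of_mul mx_of_sum; apply: mx_of_eq => J' J.
have := key hq hi t t J' J; rewrite /L /Rhs => ->.
apply: eq_bigr => j _.
rewrite (_ : (j <= t)%N = true) ?mul1r; last by have := ltn_ord j; lia.
rewrite sum_if_eq.
rewrite /M mulr_sumr; apply: eq_bigr => b _.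
case: (eqVneq (fcoef q qi i (t - j)%N J' b) 0) => [->|nz]; first by rewrite !(mul0r, mulr0).
have := fcoef_wt hi nz => ->.
rewrite /gfun mulrCA mulrA; congr (_ * _ * _); congr (gb _ _ _ _).
have := ltn_ord j; lia.
Qed.

Lemma Ein l : GA (e_mx q qi n m i l).
Proof. by apply: ga_gen; right; exists i, l; split => //; left. Qed.
Lemma Fin l : GA (f_mx q qi n m i l).
Proof. by apply: ga_gen; right; exists i, l; split => //; right. Qed.
Lemma Kin : GA (K_mx q qi n m i).
Proof. by apply: ga_gen; left; exists i. Qed.

Lemma Dgt_in t : GA (Dg (fun J : T => gb q qi (wt i J) t)).
Proof.
elim/ltn_ind: t => t IH.
have H := EF_identity t.
rewrite big_ord_recr /= subnn f_mx0 e_mx0 mulmx1 mulmx1 in H.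
have -> : Dg (fun J : T => gb q qi (wt i J) t) =
   e_mx q qi n m i t *m f_mx q qi n m i t -
   \sum_(j < t) Dg (fun J : T => gb q qi (wt i J) j) *m
      (f_mx q qi n m i (t - j) *m e_mx q qi n m i (t - j)).
  by rewrite H addrAC subrr add0r.
apply: ga_sub; first by apply: ga_mul; [exact: Ein | exact: Fin].
apply: ga_sum => j; apply: ga_mul; first by apply: IH.
by apply: ga_mul; [exact: Fin | exact: Ein].
Qed.


Lemma K_Dg : K_mx q qi n m i = Dg (fun J : T => qp (wt i J)).
Proof. by []. Qed.

Lemma Dgc_in c k : GA (Dg (fun J : T => gb q qi (wt i J + c%:Z) k)).
Proof.
elim: c k => [|c IH] k.
  rewrite (Dg_eq (psi := fun J : T => gb q qi (wt i J) k)); first exact: Dgt_in.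
  by move=> J; rewrite addr0.
case: k => [|k].
  by rewrite (Dg_eq (psi := fun _ => 1)) ?Dg_one; [exact: ga_one | move=> J; rewrite gb0].
rewrite (Dg_eq (psi := fun J : T => qp (- (k.+1)%:Z) * gb q qi (wt i J + c%:Z) k.+1 +
   qp (c%:Z - k%:Z) * (qp (wt i J) * gb q qi (wt i J + c%:Z) k))); last first.
  move=> J; rewrite (_ : wt i J + c.+1%:Z = (wt i J + c%:Z) + 1); last by lia.
  rewrite gb_pascal // mulrA -qpowD //; congr (_ + qp _ * _); lia.
rewrite -Dg_add -!Dg_scale -Dg_mul.
apply: ga_add; apply: ga_scale; first exact: IH.
by apply: ga_mul; [rewrite -K_Dg; exact: Kin | exact: IH].
Qed.


Lemma cw_bound (j : 'I_n) : -1 <= cw i j <= 1.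
Proof. by rewrite /cw; case: (_ == _); case: (_ == _). Qed.

Lemma wt_bound (J : T) : - (m%:Z) <= wt i J <= m%:Z.
Proof.
have hs : \sum_(k < m) (1 : int) = m%:Z by rewrite sumr_const card_ord natz.
apply/andP; split.
  rewrite -hs -sumrN; apply: ler_sum => k _; by case/andP: (cw_bound (J k)).
by rewrite -hs; apply: ler_sum => k _; case/andP: (cw_bound (J k)).
Qed.

Definition xn (J : T) : nat := absz (wt i J + m%:Z).

Lemma xnE J : (xn J)%:Z = wt i J + m%:Z.
Proof.
rewrite /xn gez0_abs //; case/andP: (wt_bound J) => h1 _.
by rewrite -lerBlDr sub0r.
Qed.

Lemma xn_le J : (xn J < (2 * m).+1)%N.
Proof.
have := xnE J; case/andP: (wt_bound J) => h1 h2 e.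
rewrite ltnS -(lez_nat); rewrite e; lia.
Qed.

Lemma Dgp_in k : GA (Dg (fun J : T => gbp q qi (xn J) k)).
Proof.
rewrite (Dg_eq (psi := fun J : T => gb q qi (wt i J + m%:Z) k)); first exact: Dgc_in.
by move=> J; rewrite -xnE.
Qed.

Definition Ind (x0 : nat) : Mx := Dg (fun J : T => (xn J == x0)%:R).

Lemma Dg_zero : Dg (fun _ : T => 0 : R) = 0.
Proof. by apply/matrixP => a b; rewrite !mxE; case: (_ == _). Qed.

Lemma Dg_sum k (F : 'I_k -> T -> R) :
  \sum_(y < k) Dg (F y) = Dg (fun J => \sum_(y < k) F y J).
Proof.
rewrite /Dg mx_of_sum; apply: mx_of_eq => J' J.
by case: eqP => _ //; rewrite big1.
Qed.

Lemma Dg_sub (f g : T -> R) : Dg f - Dg g = Dg (fun J => f J - g J).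
Proof.
rewrite -scaleN1r Dg_scale Dg_add; apply: Dg_eq => J; ring.
Qed.

Lemma sum_collapse K X (P : pred nat) (F : nat -> R) : (X < K)%N ->
  \sum_(y < K) (if P y then F y * (X == y)%:R else 0) = if P X then F X else 0.
Proof.
move=> hX; rewrite (bigD1 (Ordinal hX)) //= eqxx mulr1 big1 ?addr0 // => y hy.
have -> : (X == y) = false.
  by apply/negbTE; apply: contra hy => /eqP e; apply/eqP/val_inj.
by case: (P y); rewrite ?mulr0.
Qed.

Lemma Ind_in x0 : GA (Ind x0).
Proof.
suff H : forall k x0, (2 * m < x0 + k)%N -> GA (Ind x0).
  by apply: (H (2 * m).+1); lia.
elim=> [|k IH] {}x0 hk.
  have -> : Ind x0 = 0.
    rewrite -Dg_zero; apply: Dg_eq => J.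
    by rewrite (_ : (xn J == x0) = false) //; have := xn_le J; lia.
  exact: ga_zero.
case: (ltnP (2 * m) x0) => hx0.
  have -> : Ind x0 = 0.
    rewrite -Dg_zero; apply: Dg_eq => J.
    by rewrite (_ : (xn J == x0) = false) //; have := xn_le J; lia.
  exact: ga_zero.
have -> : Ind x0 = Dg (fun J : T => gbp q qi (xn J) x0) -
   \sum_(y < (2 * m).+1) Dg (fun J : T => if (x0 < y)%N then gbp q qi y x0 * (xn J == y)%:R else 0).
  rewrite Dg_sum Dg_sub; apply: Dg_eq => J.
  rewrite (sum_collapse (fun y => (x0 < y)%N) (fun y => gbp q qi y x0)) ?xn_le //.
  case: (ltngtP (xn J) x0) => h.
  - by rewrite gbp_lt // subr0.
  - by rewrite subrr.
  - by rewrite h gbp_id subr0.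
apply: ga_sub; first exact: Dgp_in.
apply: ga_sum => y; case: (ltnP x0 y) => hy.
  have -> : Dg (fun J : T => if true then gbp q qi y x0 * (xn J == y)%:R else 0) =
     gbp q qi y x0 *: Ind y by rewrite /Ind Dg_scale.
  apply: ga_scale; apply: IH; lia.
by rewrite Dg_zero; exact: ga_zero.
Qed.

End AlgI.


Section Final.
Variables (R : comPzRingType) (q qi : R).
Hypothesis hq : q * qi = 1.
Local Notation qp := (qpow q qi).
Variables (n m : nat).
Hypothesis hn : (1 <= n)%N.
Local Notation T := (tens n m).
Local Notation Mx := (EndV R n m).
Local Notation GA := (gen_alg (U'_gens q qi (n:=n) (m:=m))).

Definition eqvk k (J J0 : T) := [forall i : 'I_k, wt i J == wt i J0].

Lemma eqvk_in k (J0 : T) : (k <= n.-1)%N -> GA (Dg (fun J : T => (eqvk k J J0)%:R)).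
Proof.
elim: k => [|k IH] hk.
  rewrite (Dg_eq (psi := fun _ => 1)) ?Dg_one; first exact: ga_one.
  by move=> J; rewrite /eqvk (_ : [forall i : 'I_0, _] = true) //; apply/forallP => [[]].
have hi : (k.+1 < n)%N by lia.
have -> : Dg (fun J : T => (eqvk k.+1 J J0)%:R) =
   Dg (fun J : T => (eqvk k J J0)%:R) *m Ind R n m k (xn k J0).
  rewrite /Ind Dg_mul; apply: Dg_eq => J.
  rewrite /eqvk forall_split.
  have -> : (xn k J == xn k J0) = (wt k J == wt k J0).
    apply/eqP/eqP => [e|e]; last by rewrite /xn e.
    by have := xnE k J; rewrite e xnE => /addIr.
  rewrite (eq_forallb (fun i => (_ : (wt (lift ord_max i) J == wt (lift ord_max i) J0) =
     (wt i J == wt i J0)))); last by move=> i; rewrite val_lift_max.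
  by case: [forall i : 'I_k, _]; case: (wt k J == _); rewrite ?mulr0 ?mulr1.
apply: ga_mul; first by apply: IH; lia.
exact: Ind_in.
Qed.


Definition eqv (J J0 : T) := eqvk n.-1 J J0.

Lemma eqv_refl J : eqv J J. Proof. by apply/forallP => i. Qed.
Lemma eqv_sym J J' : eqv J J' = eqv J' J.
Proof. by apply/forallP/forallP => H i; rewrite eq_sym H. Qed.
Lemma eqv_trans J1 J2 J3 : eqv J1 J2 -> eqv J2 J3 -> eqv J1 J3.
Proof.
by move=> /forallP H1 /forallP H2; apply/forallP => i; rewrite (eqP (H1 i)) H2.
Qed.

Lemma class_in (phi : T -> R) :
  (forall J J0, eqv J J0 -> phi J = phi J0) -> GA (Dg phi).
Proof.
move=> hphi.
suff H : forall k (X : {set T}), (#|X| <= k)%N ->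
    (forall J J0, eqv J J0 -> (J \in X) = (J0 \in X)) ->
    GA (Dg (fun J => if J \in X then phi J else 0)).
  rewrite (Dg_eq (psi := fun J => if J \in [set: T] then phi J else 0)).
    by apply: (H #|[set: T]|) => // J J0 _; rewrite !inE.
  by move=> J; rewrite inE.
elim=> [|k IH] X hX hcl.
  have -> : X = set0 by apply/eqP; rewrite -cards_eq0; lia.
  rewrite (Dg_eq (psi := fun _ => 0)) ?Dg_zero; first exact: ga_zero.
  by move=> J; rewrite inE.
case: (set_0Vmem X) => [->|[J0 hJ0]].
  rewrite (Dg_eq (psi := fun _ => 0)) ?Dg_zero; first exact: ga_zero.
  by move=> J; rewrite inE.
set X' := X :\: [set J | eqv J J0].
have -> : Dg (fun J => if J \in X then phi J else 0) =
    phi J0 *: Dg (fun J : T => (eqv J J0)%:R) + Dg (fun J => if J \in X' then phi J else 0).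
  rewrite Dg_scale Dg_add; apply: Dg_eq => J; rewrite !inE.
  case E: (eqv J J0) => /=.
    by rewrite (hcl _ _ E) hJ0 (hphi _ _ E) mulr1 addr0.
  by rewrite mulr0 add0r.
apply: ga_add; first by apply: ga_scale; apply: eqvk_in.
apply: IH.
  have hsub : X' \subset X :\ J0.
    apply/subsetP => J; rewrite !inE => /andP[hne ->]; rewrite andbT.
    by apply: contra hne => /eqP ->; rewrite eqv_refl.
  have := subset_leq_card hsub; move: hX; rewrite (cardsD1 J0 X) hJ0 /=; lia.
move=> J J' E; rewrite !inE (hcl _ _ E).
congr (~~ _ && _).
apply/idP/idP => h; first by apply: eqv_trans h; rewrite eqv_sym.
exact: eqv_trans E h.
Qed.

Definition cntn (v : nat) (J : T) : nat := (\sum_(k < m) (nat_of_ord (J k) == v))%N.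

Lemma wt_cnt i (J : T) : wt i J = (cntn i J)%:Z - (cntn i.+1 J)%:Z.
Proof. by rewrite /wt /cntn !Posz_sum -sumrB. Qed.

Lemma cnt_sum (J : T) : (\sum_(v < n) cntn v J)%N = m.
Proof.
rewrite /cntn exchange_big /= -[m in RHS]card_ord -sum1_card.
apply: eq_bigr => k _; rewrite (bigD1 (J k)) //= eqxx big1 // => v hv.
by rewrite (_ : (_ == _) = false) //; apply/negbTE; apply: contra hv => /eqP e; apply/eqP/val_inj.
Qed.

Lemma qh_cnt (h : 'I_n -> int) (J : T) :
  \sum_(k < m) h (J k) = \sum_(v < n) h v * (cntn v J)%:Z.
Proof.
under [RHS]eq_bigr do rewrite /cntn Posz_sum mulr_sumr.
rewrite exchange_big /=; apply: eq_bigr => k _.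
rewrite (bigD1 (J k)) //= eqxx mulr1 big1 ?addr0 // => v hv.
by rewrite (_ : (_ == _) = false) ?mulr0 //; apply/negbTE; apply: contra hv => /eqP e; apply/eqP/val_inj.
Qed.

Lemma cnt_eq (J J0 : T) : eqv J J0 -> forall v : 'I_n, cntn v J = cntn v J0.
Proof.
move=> /forallP E.
pose d (v : nat) : int := (cntn v J)%:Z - (cntn v J0)%:Z.
have step : forall v, (v.+1 < n)%N -> d v.+1 = d v.
  move=> v hv; have := E (Ordinal (_ : (v < n.-1)%N)).
  move=> /(_ _) H; have := H ltac:(lia) => /eqP; rewrite /= !wt_cnt /d; lia.
have all0 : forall v, (v < n)%N -> d v = d 0.
  elim=> [//|v IHv] hv; rewrite step //; apply: IHv; lia.
have hsum : \sum_(v < n) d v = 0.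
  by rewrite /d sumrB -!Posz_sum !cnt_sum subrr.
have h0 : d 0 = 0.
  have : \sum_(v < n) d v = d 0 *+ n.
    by rewrite (eq_bigr (fun _ => d 0)) ?sumr_const ?card_ord // => v _; apply: all0.
  rewrite hsum => /esym/eqP; rewrite mulrn_eq0 => /orP[/eqP hn0|/eqP //]; lia.
move=> v; have := all0 v (ltn_ord v); rewrite h0 /d; lia.
Qed.


Lemma qh_in (h : 'I_n -> int) : GA (qh_mx q qi m h).
Proof.
rewrite (_ : qh_mx q qi m h = Dg (fun J : T => qp (\sum_(k < m) h (J k)))) //.
apply: class_in => J J0 E; rewrite !qh_cnt; congr qp.
by apply: eq_bigr => v _; rewrite (cnt_eq E).
Qed.

End Final.

Unset Implicit Arguments.

Theorem theorem2p1 (R : comPzRingType) (q qi : R) (hq : q * qi = 1)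
  (n : nat) (hn : (1 <= n)%N) (m : nat) (A : EndV R n m) :
  rho_U q qi n m A <-> rho_U' q qi n m A.
Proof.
rewrite /rho_U /rho_U'; split.
- elim => {A} [A [[h ->]|[i [l [hi hA]]]]| |A B _ hA _ hB|A B _ hA _ hB|r A _ hA].
  + exact: qh_in.
  + by apply: ga_gen; right; exists i, l.
  + exact: ga_one.
  + exact: ga_add.
  + exact: ga_mul.
  + exact: ga_scale.
- elim => {A} [A [[i [hi ->]]|[i [l [hi hA]]]]| |A B _ hA _ hB|A B _ hA _ hB|r A _ hA].
  + by apply: ga_gen; left; exists (fun j => cw i j).
  + by apply: ga_gen; right; exists i, l.
  + exact: ga_one.
  + exact: ga_add.
  + exact: ga_mul.
  + exact: ga_scale.
Qed.
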